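(* For any vertex $x\in V$, any set $A\subseteq V$, any integer $T\geq 0$ and any $\lambda>0$, the volume-biased evolving set process $(S_t)$ started from $S_0=\{x\}$ satisfies \[ \widehat{\mathbf P}_x\Big[\max_{0\le t\le T}\frac{\mu(S_t\setminus A)}{\mu(S_t)} > \lambda\,\varepsilon_x(T,A)\Big] < \frac1\lambda, \] where $\varepsilon_x(T,A)$ is the probability that a lazy random walk $(X_i)$ started at $X_0=x$ satisfies $X_j\notin A$ for some $j\in\{0,1,\dots,T\}$.
   Context: Let $G=(V,E)$ be a finite simple undirected graph in which every vertex has positive degree $d(x)$. For $S\subseteq V$, $\mu(S)=\sum_{x\in S}d(x)$. The lazy random walk has transition kernel $p(x,y)=1/(2d(x))$ if $\{x,y\}\in E$, $p(x,x)=1/2$, and $0$ otherwise; $p(x,S)=\sum_{y\in S}p(x,y)$. The evolving set process (ESP): from state $S$, pick $U$ uniform on $[0,1]$ and move to $\{y: p(y,S)\geq U\}$; $K(S,S')$ denotes its transition kernel. The volume-biased ESP is the Markov chain on nonempty subsets with kernel $\widehat K(S,S')=\frac{\mu(S')}{\mu(S)}K(S,S')$; $\widehat{\mathbf P}_x$ denotes its law started at $\{x\}$. *)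

(* Defs.v *)
From HB Require Import structures.
From mathcomp Require Import all_boot all_order all_algebra.
Set Implicit Arguments. Unset Strict Implicit. Unset Printing Implicit Defensive.
Import Order.TTheory GRing.Theory Num.Theory.
Local Open Scope ring_scope.

(* A finite simple graph on vertex type V is given by a symmetric,
   irreflexive relation e : rel V. *)

Definition deg (V : finType) (e : rel V) (x : V) : nat := #|[set y | e x y]|.

Definition mu (R : realFieldType) (V : finType) (e : rel V) (S : {set V}) : R :=
  \sum_(x in S) (deg e x)%:R.

Definition lazyp (R : realFieldType) (V : finType) (e : rel V) (x y : V) : R :=
  if x == y then 1 / 2
  else if e x y then 1 / (2 * (deg e x)%:R) else 0.

Definition lazypS (R : realFieldType) (V : finType) (e : rel V) (x : V)
    (S : {set V}) : R :=
  \sum_(y in S) lazyp R e x y.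

(* ESP transition kernel K(S,S') = Leb{ U in [0,1] : {y : p(y,S) >= U} = S' }.
   The set of such U is the interval (a, b] intersected with [0,1], where
   b = min_{y in S'} p(y,S) and a = max_{y notin S'} p(y,S) (the values
   p(y,S) all lie in [0,1]); K is the length of that interval. *)
Definition espK (R : realFieldType) (V : finType) (e : rel V)
    (S S' : {set V}) : R :=
  let b := \big[Num.min/1]_(y in S') lazypS R e y S in
  let a := \big[Num.max/0]_(y in ~: S') lazypS R e y S in
  Num.max 0 (b - a).

Definition espKhat (R : realFieldType) (V : finType) (e : rel V)
    (S S' : {set V}) : R :=
  mu R e S' / mu R e S * espK R e S S'.

Definition PhatEvent (R : realFieldType) (V : finType) (e : rel V) (x : V)
    (T : nat) (P : pred {ffun 'I_T.+1 -> {set V}}) : R :=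
  \sum_(S : {ffun 'I_T.+1 -> {set V}} | P S)
     ((S ord0 == [set x])%:R *
      \prod_(i < T) espKhat R e (S (inord i)) (S (inord i.+1))).

Definition RWEvent (R : realFieldType) (V : finType) (e : rel V) (x : V)
    (T : nat) (P : pred {ffun 'I_T.+1 -> V}) : R :=
  \sum_(X : {ffun 'I_T.+1 -> V} | P X)
     ((X ord0 == x)%:R *
      \prod_(i < T) lazyp R e (X (inord i)) (X (inord i.+1))).

Definition escape_eps (R : realFieldType) (V : finType) (e : rel V) (x : V)
    (T : nat) (A : {set V}) : R :=
  RWEvent R e x (fun X => [exists j : 'I_T.+1, X j \notin A]).

Arguments PhatEvent R {V} e x T P.
Arguments RWEvent R {V} e x T P.

(* Main.v *)
Require Import Defs.
From HB Require Import structures.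
From mathcomp Require Import all_boot all_order all_algebra.
Set Implicit Arguments. Unset Strict Implicit. Unset Printing Implicit Defensive.
Import Order.TTheory GRing.Theory Num.Theory.
Local Open Scope ring_scope.

Definition KD (R : realFieldType) (V : finType) (v : V -> R) (D S : {set V}) : R :=
  Num.max 0 (\big[Num.min/1]_(z in S) v z - \big[Num.max/0]_(z in D :\: S) v z).

Lemma exists_argmin (R : realFieldType) (V : finType) (v : V -> R) (D : {set V}) y :
  y \in D -> exists2 z, z \in D & forall w, w \in D -> v z <= v w.
Proof.
move=> yD; case: (arg_minP v yD) => z zD H; exists z => //.
Qed.

Lemma keyD (R : realFieldType) (V : finType) (v : V -> R) :
  (forall z, 0 <= v z) -> (forall z, v z <= 1) ->
  forall n (D : {set V}), #|D| = n -> forall y, y \in D ->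
  \sum_(S : {set V} | (S \subset D) && (y \in S)) KD v D S = v y.
Proof.
move=> v0 v1; elim=> [|n IH] D cD y yD.
  by move: cD => /eqP; rewrite cards_eq0 => /eqP Dn; rewrite Dn inE in yD.
have [z zD zmin] := exists_argmin v yD.
set D' := D :\ z.
have cD' : #|D'| = n by move: cD; rewrite /D' (cardsD1 z D) zD; case.
have minD : \big[Num.min/1]_(w in D) v w = v z.
  apply/le_anti; rewrite (bigmin_le_cond _ _ zD) /=.
  by apply: le_bigmin => //.
rewrite (bigID (fun S : {set V} => z \in S)) /=.
have -> : \sum_(S : {set V} | ((S \subset D) && (y \in S)) && (z \in S)) KD v D S = v z.
  rewrite (bigD1 D) /=; last by rewrite subxx yD zD.
  rewrite big1 ?addr0.
    rewrite /KD minD setDv big_set0 subr0; exact/max_idPr.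
  move=> S /andP[/andP[/andP[SD yS] zS] SnD].
  have [w wD wS] : exists2 w, w \in D & w \notin S.
    have : S \proper D by rewrite properEneq SnD SD.
    by case/properP.
  apply/max_idPl; rewrite subr_le0.
  apply: le_trans (bigmin_le_cond _ _ zS) _.
  apply: le_trans (zmin _ wD) _.
  by apply: le_bigmax_cond; rewrite inE wS wD.
have [<-|yz] := eqVneq z y.
  by rewrite big_pred0 ?addr0 // => S; case: (z \in S); rewrite ?andbF ?andbT.
have yD' : y \in D' by rewrite /D' !inE eq_sym yz yD.
have := IH D' cD' y yD'.
rewrite (bigD1 D') /=; last by rewrite subxx yD'.
move=> IHe.
rewrite (eq_bigl (fun S : {set V} => (S \subset D') && (y \in S))); last first.
  by move=> S; rewrite /D' subsetD1 andbAC.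
rewrite (bigD1 D') /=; last by rewrite subxx yD'.
have minD'0 : 0 <= \big[Num.min/1]_(w in D') v w by apply: le_bigmin.
have minD'z : v z <= \big[Num.min/1]_(w in D') v w.
  by apply: le_bigmin => // w; rewrite !inE => /andP[_ /zmin].
have E1 : KD v D' D' = \big[Num.min/1]_(w in D') v w.
  by rewrite /KD setDv big_set0 subr0; apply/max_idPr.
rewrite E1 in IHe.
have -> : KD v D D' = \big[Num.min/1]_(w in D') v w - v z.
  rewrite /KD.
  have -> : \big[Num.max/0]_(w in D :\: D') v w = v z.
    apply/le_anti; apply/andP; split.
      apply/bigmax_leP; split => // w; rewrite !inE.
      move=> /andP[H wD]; have : w == z by apply: contraNT H => wz; rewrite wz wD.
      by move/eqP->.
    by apply: le_bigmax_cond; rewrite !inE eqxx zD.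
  by apply/max_idPr; rewrite subr_ge0.
rewrite (eq_bigr (fun S => KD v D' S)); last first.
  move=> S /andP[/andP[SD' yS] SnD'].
  have [w wD' wS] : exists2 w, w \in D' & w \notin S.
    have : S \proper D' by rewrite properEneq SnD' SD'.
    by case/properP.
  rewrite /KD; congr (Num.max 0 (_ - _)).
  apply/le_anti; apply/andP; split.
    apply/bigmax_leP; split; first by apply: bigmax_ge_id.
    move=> i; rewrite !inE => /andP[iS iD].
    have [->|iz] := eqVneq i z.
      apply: le_trans (zmin w _) _; first by move: wD'; rewrite !inE => /andP[].
      by apply: le_bigmax_cond; rewrite inE wS wD'.
    by apply: le_bigmax_cond; rewrite !inE iS iz iD.
  apply/bigmax_leP; split; first by apply: bigmax_ge_id.
  move=> i; rewrite !inE => /andP[iS /andP[iz iD]].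
  by apply: le_bigmax_cond; rewrite !inE iS iD.
rewrite -IHe; set m := \big[Num.min/1]_(w in D') v w.
by rewrite addrA [v z + _]addrC subrK.
Qed.

Lemma deg_gt0R (R : realFieldType) (V : finType) (e : rel V)
  (deg_pos : forall v : V, (0 < deg e v)%N) y : 0 < (deg e y)%:R :> R.
Proof. by rewrite ltr0n. Qed.

Lemma lazyp_ge0 (R : realFieldType) (V : finType) (e : rel V) x y :
  0 <= lazyp R e x y.
Proof.
rewrite /lazyp; case: eqP => _; first by rewrite mul1r invr_ge0 ler0n.
by case: (e x y) => //; rewrite mul1r invr_ge0 mulr_ge0 // ler0n.
Qed.

Lemma lazyp_sum1 (R : realFieldType) (V : finType) (e : rel V)
  (e_irr : irreflexive e) (deg_pos : forall v : V, (0 < deg e v)%N) x :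
  \sum_y lazyp R e x y = 1.
Proof.
rewrite (bigD1 x) //= /lazyp eqxx.
rewrite (eq_bigr (fun y => if e x y then 1 / (2 * (deg e x)%:R) else 0)); last first.
  by move=> y yx; rewrite eq_sym (negbTE yx).
rewrite -big_mkcondr /=.
rewrite (eq_bigl (fun y => y \in [set y | e x y])); last first.
  move=> y; rewrite inE; case exy: (e x y); rewrite ?andbF ?andbT //.
  by apply/eqP=> yx; rewrite yx e_irr in exy.
rewrite sumr_const -/(deg e x) -[_ *+ deg e x]mulr_natr !mul1r invfM -mulrA mulVf; last first.
  by rewrite pnatr_eq0 -lt0n.
by rewrite mulr1 [RHS](splitr 1) !mul1r.
Qed.

Lemma lazypS_ge0 (R : realFieldType) (V : finType) (e : rel V) x S :
  0 <= lazypS R e x S.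
Proof. by apply: sumr_ge0 => y _; apply: lazyp_ge0. Qed.

Lemma lazypS_le1 (R : realFieldType) (V : finType) (e : rel V)
  (e_irr : irreflexive e) (deg_pos : forall v : V, (0 < deg e v)%N) x S :
  lazypS R e x S <= 1.
Proof.
rewrite -(lazyp_sum1 R e_irr deg_pos x) /lazypS [X in _ <= X](bigID (fun y => y \in S)) /=.
by rewrite lerDl; apply: sumr_ge0 => y _; apply: lazyp_ge0.
Qed.

Lemma lazyp_rev (R : realFieldType) (V : finType) (e : rel V)
  (e_sym : symmetric e) (deg_pos : forall v : V, (0 < deg e v)%N) x y :
  (deg e x)%:R * lazyp R e x y = (deg e y)%:R * lazyp R e y x.
Proof.
rewrite /lazyp; have [->|xy] := eqVneq x y; first by [].
rewrite e_sym.
case: (e y x); last by rewrite !mulr0.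
have H z : (deg e z)%:R * (1 / (2 * (deg e z)%:R)) = 1 / 2 :> R.
  rewrite mul1r invfM mulrCA mulfV ?mulr1 ?mul1r //.
  by rewrite pnatr_eq0 -lt0n.
by rewrite !H.
Qed.

Lemma espK_ge0 (R : realFieldType) (V : finType) (e : rel V) S S' :
  0 <= espK R e S S'.
Proof. by rewrite /espK le_max lexx. Qed.

Lemma mu_ge0 (R : realFieldType) (V : finType) (e : rel V) S : 0 <= mu R e S.
Proof. by apply: sumr_ge0 => y _; rewrite ler0n. Qed.

Lemma mu_gt0 (R : realFieldType) (V : finType) (e : rel V)
  (deg_pos : forall v : V, (0 < deg e v)%N) (S : {set V}) y : y \in S -> 0 < mu R e S.
Proof.
move=> yS; rewrite /mu (bigD1 y) //=; apply: ltr_pwDl; first by rewrite ltr0n.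
by apply: sumr_ge0 => z _; rewrite ler0n.
Qed.

Lemma espKhat_ge0 (R : realFieldType) (V : finType) (e : rel V) S S' :
  0 <= espKhat R e S S'.
Proof.
by rewrite /espKhat mulr_ge0 ?espK_ge0 // divr_ge0 // mu_ge0.
Qed.

Lemma espK_sum (R : realFieldType) (V : finType) (e : rel V)
  (e_irr : irreflexive e) (deg_pos : forall v : V, (0 < deg e v)%N) S y :
  \sum_(S' : {set V} | y \in S') espK R e S S' = lazypS R e y S.
Proof.
have := @keyD R V (fun z => lazypS R e z S) (fun z => lazypS_ge0 R e z S)
  (fun z => lazypS_le1 R e_irr deg_pos z S) _ setT erefl y (in_setT y).
move=> <-; apply: eq_big => [S'|S' _]; first by rewrite subsetT.
by rewrite /KD /espK setTD.
Qed.

Definition Lam (R : realFieldType) (V : finType) (e : rel V) (f : V -> R)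
  (S : {set V}) : R := (\sum_(y in S) (deg e y)%:R * f y) / mu R e S.

Lemma aux_cancel (R : realFieldType) (a b k X : R) :
  a != 0 -> a / b * k * (X / a) = k * X / b.
Proof.
move=> a0; rewrite mulrC -!mulrA mulKf //.
by rewrite [RHS]mulrCA [_^-1 * k]mulrC.
Qed.

Lemma intertwine (R : realFieldType) (V : finType) (e : rel V)
  (e_sym : symmetric e) (e_irr : irreflexive e)
  (deg_pos : forall v : V, (0 < deg e v)%N) (f : V -> R) (S : {set V}) :
  \sum_(S' : {set V}) espKhat R e S S' * Lam e f S' =
  (\sum_(z in S) (deg e z)%:R * \sum_y lazyp R e z y * f y) / mu R e S.
Proof.
rewrite (eq_bigr (fun S' => espK R e S S' * (\sum_(y in S') (deg e y)%:R * f y)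
   / mu R e S)); last first.
  move=> S' _; rewrite /espKhat /Lam.
  have [->|/set0Pn [y yS']] := eqVneq S' set0.
    by rewrite big_set0 mul0r !mulr0 mul0r.
  by rewrite aux_cancel // gt_eqF // (mu_gt0 R deg_pos yS').
rewrite -mulr_suml; congr (_ / _).
rewrite (eq_bigr (fun S' : {set V} => \sum_y (if y \in S' then espK R e S S' *
   ((deg e y)%:R * f y) else 0))); last first.
  by move=> S' _; rewrite mulr_sumr big_mkcond.
rewrite exchange_big /=.
rewrite (eq_bigr (fun y => (deg e y)%:R * f y * lazypS R e y S)); last first.
  move=> y _; rewrite -big_mkcond /= -(espK_sum R e_irr deg_pos S y) mulr_sumr.
  by apply: eq_bigr => S' _; rewrite mulrC.
rewrite [RHS](eq_bigr (fun z => \sum_y (deg e z)%:R * lazyp R e z y * f y)); last first.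
  by move=> z _; rewrite mulr_sumr; apply: eq_bigr => y _; rewrite mulrA.
rewrite exchange_big /=; apply: eq_bigr => y _.
rewrite /lazypS mulr_sumr; apply: eq_bigr => z _.
by rewrite (lazyp_rev R e_sym deg_pos) mulrAC.
Qed.

Lemma Lam1 (R : realFieldType) (V : finType) (e : rel V)
  (deg_pos : forall v : V, (0 < deg e v)%N) (S : {set V}) (y : V) :
  y \in S -> Lam e (fun _ : V => 1 : R) S = 1.
Proof.
move=> yS; rewrite /Lam /mu (eq_bigr (fun y => (deg e y)%:R)) ?mulfV //.
  by rewrite gt_eqF // (mu_gt0 R deg_pos yS).
by move=> z _; rewrite mulr1.
Qed.

Lemma espKhat_sum1 (R : realFieldType) (V : finType) (e : rel V)
  (e_sym : symmetric e) (e_irr : irreflexive e)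
  (deg_pos : forall v : V, (0 < deg e v)%N) (S : {set V}) (x : V) :
  x \in S -> \sum_(S' : {set V}) espKhat R e S S' = 1.
Proof.
move=> xS.
have := intertwine e_sym e_irr deg_pos (fun _ : V => 1 : R) S.
rewrite (eq_bigr (fun z => (deg e z)%:R)); last first.
  move=> z _; rewrite (eq_bigr (fun y => lazyp R e z y)); last by move=> y _; rewrite mulr1.
  by rewrite lazyp_sum1 // mulr1.
rewrite -/(mu R e S) mulfV ?gt_eqF ?(mu_gt0 R deg_pos xS) // => <-.
apply: eq_bigr => S' _.
have [->|/set0Pn [y yS']] := eqVneq S' set0.
  by rewrite /espKhat /mu big_set0 !mul0r.
by rewrite (Lam1 R deg_pos yS') mulr1.
Qed.

Definition fcons (U : Type) n (u : U) (t : {ffun 'I_n -> U}) : {ffun 'I_n.+1 -> U} :=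
  [ffun i => if unlift ord0 i is Some j then t j else u].
Definition ftail (U : Type) n (f : {ffun 'I_n.+1 -> U}) : {ffun 'I_n -> U} :=
  [ffun j => f (lift ord0 j)].

Lemma fcons0 (U : Type) n (u : U) (t : {ffun 'I_n -> U}) : fcons u t ord0 = u.
Proof. by rewrite ffunE unlift_none. Qed.

Lemma fconsS (U : Type) n (u : U) (t : {ffun 'I_n.+1 -> U}) (j : nat) :
  (j <= n)%N -> fcons u t (inord j.+1) = t (inord j).
Proof.
move=> jn.
have -> : (inord j.+1 : 'I_n.+2) = lift ord0 (inord j : 'I_n.+1).
  by apply: val_inj => /=; rewrite /bump /= !inordK.
by rewrite ffunE liftK.
Qed.

Lemma fsplit (R : nmodType) (U : finType) n (F : {ffun 'I_n.+1 -> U} -> R) :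
  \sum_f F f = \sum_u \sum_(t : {ffun 'I_n -> U}) F (fcons u t).
Proof.
rewrite pair_big /=.
rewrite (reindex (fun p : U * {ffun 'I_n -> U} => fcons p.1 p.2)) //=.
exists (fun f : {ffun 'I_n.+1 -> U} => (f ord0, ftail f)) => [[u t] _ | f _] /=.
  congr (_, _); first by rewrite fcons0.
  by apply/ffunP => j; rewrite ffunE ffunE liftK.
apply/ffunP => i; rewrite ffunE; case: unliftP => [j ->|->] //.
by rewrite ffunE.
Qed.

Fixpoint Gs (U : Type) (R : Type) (st : pred U) (val fin : U -> R) (n : nat)
  (g : nat -> U) : R :=
  if st (g 0%N) then val (g 0%N) else
  match n with 0 => fin (g 0%N) | n'.+1 => Gs st val fin n' (fun i => g i.+1) end.

Fixpoint Fd (R : realFieldType) (U : finType) (k : U -> U -> R)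
  (st : pred U) (val fin : U -> R) (n : nat) (s : U) : R :=
  if st s then val s else
  match n with 0 => fin s | n'.+1 => \sum_s' k s s' * Fd k st val fin n' s' end.

Lemma Gs_ext (U : Type) (R : Type) (st : pred U) (val fin : U -> R) n g g' :
  (forall i, (i <= n)%N -> g i = g' i) -> Gs st val fin n g = Gs st val fin n g'.
Proof.
elim: n g g' => [|n IH] g g' H /=; first by rewrite H.
by rewrite H // (IH _ (fun i => g' i.+1)) // => i iH; apply: H.
Qed.

Lemma fcons_inord0 (U : Type) n (u : U) (t : {ffun 'I_n -> U}) :
  fcons u t (inord 0) = u.
Proof.
have -> : (inord 0 : 'I_n.+1) = ord0 by apply: val_inj; rewrite /= inordK.
exact: fcons0.
Qed.

Lemma inord0E n : (inord 0 : 'I_n.+1) = ord0.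
Proof. by apply: val_inj; rewrite /= inordK. Qed.

Lemma Gs_tot (U : Type) (R : realFieldType) (val : U -> R) n g :
  Gs pred0 val (fun _ => 1) n g = 1.
Proof. by elim: n g => [|n IH] g //=. Qed.

Lemma Fd_tot (R : realFieldType) (U : finType) (k : U -> U -> R) (good : pred U)
  (Hsum : forall s, good s -> \sum_s' k s s' = 1)
  (Hgood : forall s s', good s -> ~~ good s' -> k s s' = 0) (val : U -> R) n s :
  good s -> Fd k pred0 val (fun _ => 1) n s = 1.
Proof.
elim: n s => [|n IH] s gs //=.
rewrite -[RHS](Hsum s gs); apply: eq_bigr => s' _.
case gs': (good s'); first by rewrite IH // mulr1.
by rewrite Hgood ?gs' // mul0r.
Qed.

Lemma regroup (R : realFieldType) (U : finType) (k : U -> U -> R) n s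
  (P G : {ffun 'I_n.+1 -> U} -> R) :
  \sum_(t : {ffun 'I_n.+1 -> U}) (k s (t ord0) * P t) * G t =
  \sum_s' k s s' * \sum_(t : {ffun 'I_n.+1 -> U}) ((t ord0 == s')%:R * P t) * G t.
Proof.
rewrite (eq_bigr (fun s' => \sum_(t : {ffun 'I_n.+1 -> U})
   k s s' * (((t ord0 == s')%:R * P t) * G t))); last by move=> s' _; rewrite mulr_sumr.
rewrite exchange_big /=; apply: eq_bigr => t _.
rewrite (bigD1 (t ord0)) //= eqxx mul1r big1 ?addr0 ?mulrA //.
by move=> s' /negbTE; rewrite eq_sym => ->; rewrite mul0r mul0r mulr0.
Qed.

Lemma chain (R : realFieldType) (U : finType) (k : U -> U -> R) (good : pred U)
  (Hsum : forall s, good s -> \sum_s' k s s' = 1)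
  (Hgood : forall s s', good s -> ~~ good s' -> k s s' = 0) :
  forall n st (val fin : U -> R) s, good s ->
  \sum_(f : {ffun 'I_n.+1 -> U})
     ((f ord0 == s)%:R * \prod_(i < n) k (f (inord i)) (f (inord i.+1))) *
     Gs st val fin n (fun i => f (inord i)) = Fd k st val fin n s.
Proof.
elim=> [|n IH] st val fin s gs.
  rewrite fsplit (bigD1 s) //= [X in _ + X]big1 ?addr0; last first.
    move=> u us; apply: big1 => t _; rewrite fcons0 (negbTE us) !mul0r //.
  rewrite (eq_bigr (fun _ => if st s then val s else fin s)); last first.
    by move=> t _; rewrite fcons0 eqxx big_ord0 !mul1r fcons_inord0.
  by rewrite sumr_const card_ffun card_ord expn0 /=.
rewrite fsplit (bigD1 s) //= [X in _ + X]big1 ?addr0; last first.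
  move=> u us; apply: big1 => t _; rewrite fcons0 (negbTE us) !mul0r //.
rewrite (eq_bigr (fun t : {ffun 'I_n.+1 -> U} => (k s (t ord0) *
   \prod_(i < n) k (t (inord i)) (t (inord i.+1))) *
   (if st s then val s else Gs st val fin n (fun i => t (inord i))))); last first.
  move=> t _; rewrite fcons0 eqxx mul1r big_ord_recl fcons_inord0.
  rewrite (fconsS _ _ (leq0n n)) inord0E.
  congr (_ * _ * _).
    apply: eq_bigr => i _; rewrite lift0 fconsS ?fconsS //.
    exact: ltnW.
  case: (st s) => //.
  apply: Gs_ext => i ilen; exact: fconsS.
rewrite regroup /=; case: (st s).
  rewrite -[RHS]mulr1 -[in RHS](Hsum s gs) mulr_sumr; apply: eq_bigr => s' _.
  case gs': (good s'); last by rewrite Hgood ?gs' // !mul0r mulr0.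
  rewrite -[RHS]mulr1 -[in RHS](Fd_tot Hsum Hgood val n gs') -(IH pred0 val (fun _ => 1) s' gs').
  rewrite -mulr_suml; under [in RHS]eq_bigr do rewrite Gs_tot mulr1.
  set X := \sum_(t : {ffun _ -> _}) _; set a := k s s'; set b := val s.
  by rewrite mulrCA mulrC [b * a]mulrC.
apply: eq_bigr => s' _.
case gs': (good s'); last by rewrite Hgood ?gs' // !mul0r.
by rewrite IH.
Qed.

Lemma Gs_none (U : Type) (R : realFieldType) (st : pred U) (val : U -> R) n g :
  (forall i, (i <= n)%N -> ~~ st (g i)) -> Gs st val (fun _ => 1) n g = 1.
Proof.
elim: n g => [|n IH] g H /=; rewrite (negbTE (H 0%N _)) //.
by apply: IH => i Hi; exact: H.
Qed.

Lemma Gs_some (U : Type) (R : realFieldType) (st : pred U) (val : U -> R) n g i :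
  (i <= n)%N -> st (g i) ->
  exists j, st (g j) /\ Gs st val (fun _ => 1) n g = val (g j).
Proof.
elim: n g i => [|n IH] g i Hi Hs /=.
  by move: Hi; rewrite leqn0 => /eqP Ei; subst i; rewrite Hs; exists 0%N.
case: ifP => h; first by exists 0%N.
case: i Hi Hs => [|i] Hi Hs; first by rewrite Hs in h.
have [j [Hj ->]] := IH (fun i => g i.+1) i Hi Hs.
by exists j.+1.
Qed.

Lemma Lam_le (R : realFieldType) (V : finType) (e : rel V) (f g : V -> R) S :
  (forall y, f y <= g y) -> Lam e f S <= Lam e g S.
Proof.
move=> H; rewrite /Lam ler_wpM2r ?invr_ge0 ?mu_ge0 //.
by apply: ler_sum => y _; rewrite ler_wpM2l ?ler0n.
Qed.

Lemma LamA (R : realFieldType) (V : finType) (e : rel V)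
  (deg_pos : forall v : V, (0 < deg e v)%N) (A S : {set V}) y : y \in S ->
  Lam e (fun z => (z \in A)%:R : R) S = 1 - mu R e (S :\: A) / mu R e S.
Proof.
move=> yS; have mu0 : mu R e S != 0 by rewrite gt_eqF // (mu_gt0 R deg_pos yS).
rewrite /Lam -[X in X - _](mulfV mu0) -mulrBl; congr (_ / _).
rewrite /mu (big_setID A) /= [in RHS](big_setID A) /= addrK.
rewrite [X in _ + X]big1 ?addr0.
  by apply: eq_bigr => z; rewrite inE => /andP[_ ->]; rewrite mulr1.
by move=> z; rewrite inE => /andP[/negbTE -> _]; rewrite mulr0.
Qed.

Definition uw (R : realFieldType) (V : finType) (e : rel V) (A : {set V}) n :=
  Fd (lazyp R e) (fun y => y \notin A) (fun _ => 0) (fun _ => 1) n.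

Lemma uw_bounds (R : realFieldType) (V : finType) (e : rel V)
  (e_irr : irreflexive e) (deg_pos : forall v : V, (0 < deg e v)%N) A n y :
  0 <= uw R e A n y /\ uw R e A n y <= (y \in A)%:R.
Proof.
elim: n y => [|n IH] y; rewrite /uw /=; have [yA|yA] := boolP (y \in A);
  rewrite ?yA /= ?lexx ?ler01 //.
split; first by apply: sumr_ge0 => z _; apply: mulr_ge0; [apply: lazyp_ge0 | case: (IH z)].
rewrite -[X in _ <= X](lazyp_sum1 R e_irr deg_pos y); apply: ler_sum => z _.
rewrite -[X in _ <= X]mulr1; apply: ler_wpM2l; first by apply: lazyp_ge0.
case: (IH z) => _ H; apply: le_trans H _; case: (z \in A); rewrite ?ler01 ?lexx //.
Qed.

Lemma uw_step (R : realFieldType) (V : finType) (e : rel V)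
  (e_irr : irreflexive e) (deg_pos : forall v : V, (0 < deg e v)%N) A n y :
  uw R e A n.+1 y <= \sum_z lazyp R e y z * uw R e A n z.
Proof.
rewrite {1}/uw /=; case: ifP => _ //.
by apply: sumr_ge0 => z _; apply: mulr_ge0; [apply: lazyp_ge0 | case: (uw_bounds R e_irr deg_pos A n z)].
Qed.

Lemma compare (R : realFieldType) (V : finType) (e : rel V)
  (e_sym : symmetric e) (e_irr : irreflexive e)
  (deg_pos : forall v : V, (0 < deg e v)%N) (A : {set V}) (c : R) n (S : {set V}) :
  S != set0 ->
  Lam e (uw R e A n) S <=
  Fd (espKhat R e) (fun S => c < mu R e (S :\: A) / mu R e S)
     (fun S => 1 - mu R e (S :\: A) / mu R e S) (fun _ => 1) n S.
Proof.
elim: n S => [|n IH] S /set0Pn [y yS] /=; case: ifP => _.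
- rewrite -(LamA R deg_pos A yS); apply: Lam_le => z.
  by case: (uw_bounds R e_irr deg_pos A 0 z).
- rewrite -(Lam1 R deg_pos yS); apply: Lam_le => z.
  case: (uw_bounds R e_irr deg_pos A 0 z) => _ H; apply: le_trans H _.
  by case: (z \in A); rewrite ?ler01 ?lexx.
- rewrite -(LamA R deg_pos A yS); apply: Lam_le => z.
  by case: (uw_bounds R e_irr deg_pos A n.+1 z).
apply: le_trans (_ : \sum_S' espKhat R e S S' * Lam e (uw R e A n) S' <= _).
  rewrite intertwine // /Lam ler_wpM2r ?invr_ge0 ?mu_ge0 //.
  apply: ler_sum => z _; apply: ler_wpM2l; first by rewrite ler0n.
  exact: uw_step.
apply: ler_sum => S' _.
have [->|S'0] := eqVneq S' set0.
  by rewrite /espKhat /mu big_set0 !mul0r.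
by apply: ler_wpM2l; [apply: espKhat_ge0 | apply: IH].
Qed.

Theorem lemma2 (R : realFieldType) (V : finType) (e : rel V)
  (e_sym : symmetric e) (e_irr : irreflexive e)
  (deg_pos : forall v : V, (0 < deg e v)%N)
  (x : V) (A : {set V}) (T : nat) (lam : R) (lam_pos : 0 < lam) :
  PhatEvent R e x T
    (fun S => [exists t : 'I_T.+1,
        lam * escape_eps R e x T A < mu R e (S t :\: A) / mu R e (S t)])
  < lam^-1.
Proof.
set eps := escape_eps R e x T A.
set c := lam * eps.
pose stE := fun S : {set V} => c < mu R e (S :\: A) / mu R e S.
pose valE := fun S : {set V} => 1 - mu R e (S :\: A) / mu R e S.
pose W (S : {ffun 'I_T.+1 -> {set V}}) := ((S ord0 == [set x])%:R *
   \prod_(i < T) espKhat R e (S (inord i)) (S (inord i.+1))).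
pose G (S : {ffun 'I_T.+1 -> {set V}}) :=
   Gs stE valE (fun _ => 1) T (fun i => S (inord i)).
have HsumE : forall S : {set V}, S != set0 -> \sum_S' espKhat R e S S' = 1.
  by move=> S /set0Pn [y yS]; exact: (espKhat_sum1 R e_sym e_irr deg_pos yS).
have HgoodE : forall S S' : {set V}, S != set0 -> ~~ (S' != set0) ->
    espKhat R e S S' = 0.
  by move=> S S' _; rewrite negbK => /eqP ->; rewrite /espKhat /mu big_set0 !mul0r.
have x0 : [set x] != set0 by apply/set0Pn; exists x; rewrite inE.
have W0 : forall S, 0 <= W S.
  move=> S; apply: mulr_ge0; first by rewrite ler0n.
  by apply: prodr_ge0 => i _; apply: espKhat_ge0.
have Wtot : \sum_S W S = 1.
  have := chain HsumE HgoodE T pred0 (fun _ => 0) (fun _ => 1) x0.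
  rewrite (Fd_tot HsumE HgoodE) // => H; rewrite -[RHS]H; apply: eq_bigr => S _.
  by rewrite Gs_tot mulr1.
have WG : \sum_S W S * G S = Fd (espKhat R e) stE valE (fun _ => 1) T [set x].
  rewrite -(chain HsumE HgoodE T stE valE (fun _ => 1) x0) /W /G /=; by apply: eq_bigr.
have cmp := compare e_sym e_irr deg_pos A c T x0.
have Lamx : Lam e (uw R e A T) [set x] = uw R e A T x.
  rewrite /Lam /mu !big_set1 mulrAC mulfV ?mul1r //.
  by rewrite pnatr_eq0 -lt0n.
have HsumW : forall y : V, predT y -> \sum_y' lazyp R e y y' = 1.
  by move=> y _; apply: lazyp_sum1.
have HgoodW : forall y y' : V, predT y -> ~~ predT y' -> lazyp R e y y' = 0 by [].
have uwx : uw R e A T x = 1 - eps.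
  have WXtot : \sum_(X : {ffun 'I_T.+1 -> V}) (X ord0 == x)%:R *
      \prod_(i < T) lazyp R e (X (inord i)) (X (inord i.+1)) = 1.
    have := chain HsumW HgoodW T pred0 (fun _ => 0) (fun _ => 1) (isT : predT x).
    rewrite (Fd_tot HsumW HgoodW) // => H; rewrite -[RHS]H; apply: eq_bigr => X _.
    by rewrite Gs_tot mulr1.
  rewrite /uw -(chain HsumW HgoodW T (fun y => y \notin A) (fun _ => 0) (fun _ => 1) (isT : predT x)).
  rewrite -[X in _ = X - _]WXtot /eps /escape_eps /RWEvent.
  rewrite [X in _ = X - _](bigID (fun X : {ffun 'I_T.+1 -> V} =>
     [exists j : 'I_T.+1, X j \notin A])) /= addrC addrK.
  rewrite (bigID (fun X : {ffun 'I_T.+1 -> V} =>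
     [exists j : 'I_T.+1, X j \notin A])) /= big1 ?add0r.
    apply: eq_bigr => X /existsPn H.
    rewrite Gs_none ?mulr1 //.
  move=> X /existsP [j Hj].
  have Hs : (fun y => y \notin A) ((fun i => X (inord i)) (nat_of_ord j)).
    by rewrite /= inord_val.
  have [j' [_ ->]] := @Gs_some _ _ (fun y => y \notin A) (fun _ => 0 : R) T
     (fun i => X (inord i)) j (ltn_ord j) Hs.
  by rewrite mulr0.
have eps0 : 0 <= eps.
  apply: sumr_ge0 => X _; apply: mulr_ge0; first by rewrite ler0n.
  by apply: prodr_ge0 => i _; apply: lazyp_ge0.
pose P := fun S : {ffun 'I_T.+1 -> {set V}} =>
  [exists t : 'I_T.+1, c < mu R e (S t :\: A) / mu R e (S t)].
have GP : forall S, P S -> c < 1 - G S.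
  move=> S /existsP [t Ht].
  have Hs : stE ((fun i => S (inord i)) (nat_of_ord t)) by rewrite /= inord_val.
  rewrite /G; have [j [Hj ->]] := @Gs_some _ _ stE valE T (fun i => S (inord i)) t (ltn_ord t) Hs.
  by rewrite /valE opprB addrCA subrr addr0.
have GnP : forall S, ~~ P S -> G S = 1.
  move=> S /existsPn H; apply: Gs_none => i iT.
  by have := H (inord i).
set D := \sum_S W S * (1 - G S).
have DFe : D = 1 - Fd (espKhat R e) stE valE (fun _ => 1) T [set x].
  rewrite /D -WG -[X in X - _]Wtot -sumrB; apply: eq_bigr => S _.
  by rewrite mulrBr mulr1.
have Deps : D <= eps.
  rewrite DFe lerBlDr -lerBlDl -uwx -Lamx; exact: cmp.
have DP : D = \sum_(S | P S) W S * (1 - G S).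
  rewrite /D (bigID P) /= [X in _ + X]big1 ?addr0 //.
  by move=> S /GnP ->; rewrite subrr mulr0.
rewrite ltNge; apply/negP => Hge.
set Ph := PhatEvent _ _ _ _ _ in Hge.
have PhE : Ph = \sum_(S | P S) W S by [].
have Ph0 : 0 < Ph by apply: lt_le_trans Hge; rewrite invr_gt0.
have key : c * Ph < D.
  rewrite -subr_gt0 DP PhE mulr_sumr -sumrB.
  have H0 : forall S, P S -> 0 <= W S * (1 - G S) - c * W S.
    move=> S PS; rewrite [c * _]mulrC -mulrBr; apply: mulr_ge0 => //.
    by rewrite subr_ge0 ltW // GP.
  rewrite lt_def sumr_ge0 // andbT; apply/negP => /eqP HS.
  have := psumr_eq0P H0 HS => HS'.
  move: Ph0; rewrite PhE big1 ?ltxx // => S PS.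
  have := HS' S PS; rewrite [c * _]mulrC -mulrBr => /eqP; rewrite mulf_eq0.
  case/orP => [/eqP //|]; rewrite subr_eq0 => /eqP Ec.
  by have := GP S PS; rewrite -Ec ltxx.
have H1 : 1 <= lam * Ph.
  by rewrite -(mulfV (lt0r_neq0 lam_pos)) ler_wpM2l // ltW.
have : eps <= c * Ph.
  by rewrite /c mulrAC -[X in X <= _]mul1r ler_wpM2r.
move=> H2; have := lt_le_trans key Deps.
by rewrite ltNge H2.
Qed.
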